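(* Let $L/K$ be a nontrivial finite extension inside $\bar K$, and let $N$ be the unique intermediate field $K\subseteq N\subseteq L$ such that $L/N$ is Galois of degree $r_K(L)$. Suppose $L=K(\alpha)$ where $\alpha$ has minimal polynomial $f$ over $K$ with $r_K(f)=r$, and let $\alpha=\alpha_1,\alpha_2,\dots,\alpha_r$ be the roots of $f$ contained in $L$. Then $N=K(t_1,t_2,\dots,t_r)$, where $t_1,\dots,t_r$ are the elementary symmetric polynomials evaluated at $\alpha_1,\dots,\alpha_r$.
   Context: $K$ is a perfect field with a fixed algebraic closure $\bar K$. For an irreducible $f\in K[t]$ and a root $\alpha$, the cluster size $r_K(f)$ is the number of roots of $f$ lying in $K(\alpha)$; for $L=K(\alpha)$, $r_K(L)=r_K(f)$ (independent of the choice of primitive element; equals $|{\rm Aut}(L/K)|$). The existence and uniqueness of the intermediate field $N$ with $L/N$ Galois of degree $r_K(L)$ is known (it is $N=L^{{\rm Aut}(L/K)}$). *)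

(* Defs.v *)
From HB Require Import structures.
From mathcomp Require Import all_boot all_order all_algebra all_fingroup all_field.
Set Implicit Arguments. Unset Strict Implicit. Unset Printing Implicit Defensive.
Import GRing.Theory.
Local Open Scope ring_scope.

Definition perfect_subfield (F0 : fieldType) (Om : fieldExtType F0)
    (K : {subfield Om}) : Prop :=
  forall p : nat, p \in [pchar Om] ->
    forall x, x \in K -> exists2 y, y \in K & x = y ^+ p.

Definition elem_sym (R : comNzRingType) (s : seq R) (k : nat) : R :=
  \sum_(I : {set 'I_(size s)} | #|I| == k) \prod_(i in I) s`_i.

(* Main.v *)
Require Import Defs.
From HB Require Import structures.
From mathcomp Require Import all_boot all_order all_algebra all_fingroup all_field.
Import GRing.Theory.
Local Open Scope ring_scope.

Theorem proposition7p4 (F0 : fieldType) (Om : splittingFieldType F0)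
    (K : {subfield Om}) (alpha : Om) (N : {subfield Om}) (s : seq Om) :
  perfect_subfield K ->
  alpha \notin K ->
  uniq s ->
  head 0 s = alpha ->
  (forall x, (x \in s) = (x \in <<K; alpha>>%VS) && root (minPoly K alpha) x) ->
  (K <= N)%VS -> (N <= <<K; alpha>>)%VS ->
  galois N <<K; alpha>> ->
  \dim_N <<K; alpha>> = size s ->
  (N : {vspace Om}) = <<K & [seq elem_sym s k | k <- iota 1 (size s)]>>%VS.
Proof.
move=> _ alphaK Us hs Hs sKN sNL galNL dimNL.
set L := <<K; alpha>>%AS.
set r := size s.
set g := \prod_(x <- s) ('X - x%:P).
set es := [seq elem_sym s k | k <- iota 1 r].
have alpha_s : alpha \in s.
  by case: s hs Us Hs {dimNL r g es} => [/= a0|a t /= ->]; [rewrite -a0 rpred0 in alphaK | rewrite inE eqxx].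
have r_gt0 : (0 < r)%N by rewrite /r; case: (s) alpha_s.
have sL : {subset s <= L} by move=> x; rewrite Hs => /andP[].
have sKL : (K <= L)%VS := subv_adjoin K alpha.
have coefg k : (k <= r)%N -> g`_(r - k) = (-1) ^+ k * elem_sym s k.
  move=> kr; rewrite /g coef_prod_XsubC ?leq_subr // subKn //.
have gfix x : x \in 'Gal(L / N)%g -> map_poly x g = g.
  move=> galx.
  have galKx : x \in 'Gal(L / K)%g by apply: (subsetP (galS L sKN)).
  rewrite /g rmorph_prod /=.
  under eq_bigr => y _ do rewrite rmorphB /= map_polyX map_polyC /=.
  rewrite -(big_map x xpredT (fun y => 'X - y%:P)).
  apply: perm_big.
  have sub : {subset map x s <= s}.
    move=> _ /mapP[y ys ->]; rewrite Hs memv_gal ?sL //=.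
    have := ys; rewrite Hs => /andP[_ ry].
    rewrite -(fixedPoly_gal sKL galKx (minPolyOver K alpha)).
    by rewrite /root horner_map /= (eqP ry) rmorph0.
  have Umx : uniq (map x s) by rewrite map_inj_uniq // ; apply: fmorph_inj.
  have := uniq_min_size Umx sub; rewrite size_map => /(_ (leqnn _)) [_ eqm].
  by apply: uniq_perm.
have gL : g \is a polyOver L.
  by rewrite /g big_seq; apply: rpred_prod => y ys; rewrite polyOverXsubC sL.
have NE : fixedField 'Gal(L / N)%g = N by apply/galois_fixedField.
have esN : {subset es <= N}.
  move=> _ /mapP[k kr ->].
  have kr' : (k <= r)%N by move: kr; rewrite mem_iota; case/andP=> _; rewrite add1n ltnS.
  rewrite -(rpredMsign _ k) -coefg // -NE.
  apply/fixedFieldP; first by apply: (polyOverP gL).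
  by move=> x /gfix {2}<-; rewrite coef_map.
have sMN : (<<K & es>> <= N)%VS by apply/Fadjoin_seqP; split.
set M := <<K & es>>%AS.
have szg : size g = r.+1 by rewrite /g size_prod_XsubC.
have gM : g \is a polyOver M.
  apply/polyOverP => i.
  case: (ltngtP i r) => [ir|ri|->].
  - have -> : i = (r - (r - i))%N by rewrite subKn // ltnW.
    rewrite coefg ?leq_subr // rpredMsign; apply: seqv_sub_adjoin.
    apply/mapP; exists (r - i)%N => //; rewrite mem_iota add1n ltnS leq_subr andbT.
    by rewrite subn_gt0.
  - by rewrite nth_default ?rpred0 // szg.
  - have := lead_coef_prod_XsubC s xpredT (fun x => x); rewrite -/g.
    by rewrite /lead_coef szg => ->; rewrite rpred1.
have rg : root g alpha by rewrite /g root_prod_XsubC.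
have dvd := minPoly_dvdp gM rg.
have g0 : g != 0 by rewrite -size_poly_eq0 szg.
have := dvdp_leq g0 dvd; rewrite size_minPoly szg ltnS => degle.
have eML : <<M; alpha>>%VS = L.
  apply/eqP; rewrite eqEsubv; apply/andP; split.
    apply/FadjoinP; split; last exact: memv_adjoin.
    exact: subv_trans sMN sNL.
  exact: adjoinSl (subv_adjoin_seq _ _).
have dimL : \dim L = (r * \dim N)%N.
  by rewrite /r -dimNL divnK // field_dimS.
have le1 : (r * \dim N <= r * \dim M)%N.
  rewrite -dimL -eML dim_Fadjoin leq_mul2r degle orbT //.
apply/eqP; rewrite eq_sym eqEdim sMN /=.
by rewrite -(leq_pmul2l r_gt0).
Qed.
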